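(* Let $\mathsf{K}$ be a universal class of $\mathcal{L}$-algebras with finite presentations. Then $\mathsf{K}$ has the conservative congruence extension property if, and only if, for all finite disjoint sets of variables $\overline{x},\overline{y}$ and every conjunction of literals $\psi(\overline{x},\overline{y})$ there is a quantifier-free formula $\chi(\overline{x})$ such that (i) $\mathsf{K}\models\psi\to\chi$, and (ii) for every $\mathbf{A}\in\mathsf{K}$ generated by a tuple $\overline{a}\in A^{\overline{x}}$ with $\mathbf{A}\models\chi(\overline{a})$ and such that $\mathbf{A}\models\varepsilon(\overline{a})$ for every equation $\varepsilon(\overline{x})$ with $\mathsf{K}\models\psi^+\to\varepsilon$, there exist $\mathbf{B}\in\mathsf{K}$ extending $\mathbf{A}$ and $\overline{b}\in B^{\overline{y}}$ with $\mathbf{B}\models\psi(\overline{a},\overline{b})$.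
   Context: $\mathcal{L}$ is an algebraic first-order language with at least one constant symbol. Literals are equations and negated equations; for a conjunction of literals $\psi$, $\psi^+$ is the conjunction of the equations occurring positively. $\mathsf{K}\models\alpha$ means all members satisfy $\alpha$ under all assignments. A universal class is closed under isomorphic images, subalgebras and ultraproducts. A finite presentation of $\mathbf{A}\in\mathsf{K}$ is a pair $(\overline{a},\pi)$ where $\overline{a}\in A^{\overline{x}}$ is a finite generating tuple of $\mathbf{A}$ and $\pi(\overline{x})$ is a conjunction of equations with $\mathbf{A}\models\pi(\overline{a})$ such that for every equation $\varepsilon(\overline{x})$, $\mathbf{A}\models\varepsilon(\overline{a})$ iff $\mathsf{K}\models\pi\to\varepsilon$. $\mathsf{K}$ has finite presentations if for every finite $\overline{x}$ and conjunction of equations $\pi(\overline{x})$ satisfiable in $\mathsf{K}$ there are $\mathbf{A}\in\mathsf{K}$ and $\overline{a}\in A^{\overline{x}}$ with $(\overline{a},\pi)$ a finite presentation of $\mathbf{A}$. For $\mathbf{B}\in\mathsf{K}$, $\mathfrak{D}^+(\mathbf{B})$ is the set of atomic sentences, in $\mathcal{L}$ extended with names for elements of $B$, true in $\mathbf{B}$. $\mathsf{K}$ has the conservative congruence extension property if whenever $\mathbf{B}\in\mathsf{K}$ has a finite presentation $((\overline{a},\overline{b}),\pi(\overline{x},\overline{y}))$, $\mathbf{A}$ is the subalgebra of $\mathbf{B}$ generated by $\overline{a}$, no element of $\overline{b}$ lies in $A$, and $\rho(\overline{x},\overline{y})$ is a conjunction of negated equations with $\mathbf{B}\models\rho(\overline{a},\overline{b})$,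 there is a quantifier-free formula $\chi(\overline{x})$ with $\mathrm{Th}(\mathsf{K})\cup\mathfrak{D}^+(\mathbf{B})\vdash\rho(\overline{a},\overline{b})\to\chi(\overline{a})$ such that for every surjective homomorphism $h\colon\mathbf{A}\to\mathbf{A}'$ with $\mathbf{A}'\in\mathsf{K}$ and $\mathbf{A}'\models\chi(h(\overline{a}))$, there exist $\mathbf{B}'\in\mathsf{K}$ extending $\mathbf{A}'$ and a surjective homomorphism $h'\colon\mathbf{B}\to\mathbf{B}'$ extending $h$ with $\mathbf{B}'\models\rho(h(\overline{a}),h'(\overline{b}))$. *)

(* Defs.v *)
From mathcomp Require Import all_boot.
Set Implicit Arguments.
Unset Strict Implicit.
Unset Printing Implicit Defensive.

Record signature := Signature { opsym : Type; oparity : opsym -> nat }.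

Section UA.
Variable L : signature.

Record algebra := Algebra {
  carrier :> Type;
  op : forall f : opsym L, ('I_(oparity f) -> carrier) -> carrier }.
Arguments op : clear implicits.

Inductive term (V : Type) : Type :=
| Var : V -> term V
| App : forall f : opsym L, ('I_(oparity f) -> term V) -> term V.

Fixpoint eval (A : algebra) (V : Type) (v : V -> A) (t : term V) : A :=
  match t with
  | Var x => v x
  | App f args => op A f (fun i => eval v (args i))
  end.

Definition equation (V : Type) := (term V * term V)%type.

Inductive literal (V : Type) : Type :=
| LPos : term V -> term V -> literal V
| LNeg : term V -> term V -> literal V.

Definition sat_eq (A : algebra) V (v : V -> A) (e : equation V) : Prop :=
  eval v e.1 = eval v e.2.

Definition sat_eqs (A : algebra) V (v : V -> A) (p : seq (equation V)) : Prop :=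
  foldr (fun e P => sat_eq v e /\ P) True p.

Definition sat_neqs (A : algebra) V (v : V -> A) (p : seq (equation V)) : Prop :=
  foldr (fun e P => ~ sat_eq v e /\ P) True p.

Definition sat_lit (A : algebra) V (v : V -> A) (l : literal V) : Prop :=
  match l with
  | LPos s t => eval v s = eval v t
  | LNeg s t => eval v s <> eval v t
  end.

Definition sat_lits (A : algebra) V (v : V -> A) (p : seq (literal V)) : Prop :=
  foldr (fun l P => sat_lit v l /\ P) True p.

Fixpoint pos_part V (p : seq (literal V)) : seq (equation V) :=
  match p with
  | [::] => [::]
  | LPos s t :: q => (s, t) :: pos_part q
  | LNeg _ _ :: q => pos_part q
  end.

Inductive qff (V : Type) : Type :=
| QTrue : qff V
| QFalse : qff V
| QEq : term V -> term V -> qff V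
| QNot : qff V -> qff V
| QAnd : qff V -> qff V -> qff V
| QOr : qff V -> qff V -> qff V
| QImp : qff V -> qff V -> qff V.

Fixpoint satq (A : algebra) V (v : V -> A) (p : qff V) : Prop :=
  match p with
  | QTrue => True
  | QFalse => False
  | QEq s t => eval v s = eval v t
  | QNot q => ~ satq v q
  | QAnd q r => satq v q /\ satq v r
  | QOr q r => satq v q \/ satq v r
  | QImp q r => satq v q -> satq v r
  end.

Inductive fo : Type -> Type :=
| FEq : forall V, term V -> term V -> fo V
| FTrue : forall V, fo V
| FFalse : forall V, fo V
| FNot : forall V, fo V -> fo V
| FAnd : forall V, fo V -> fo V -> fo V
| FOr : forall V, fo V -> fo V -> fo V
| FImp : forall V, fo V -> fo V -> fo V
| FAll : forall V, fo (option V) -> fo V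
| FEx : forall V, fo (option V) -> fo V.

Definition extend (A : Type) V (v : V -> A) (c : A) : option V -> A :=
  fun o => match o with Some x => v x | None => c end.

Fixpoint sat (A : algebra) V (p : fo V) : (V -> A) -> Prop :=
  match p in fo V0 return (V0 -> A) -> Prop with
  | FEq _ s t => fun v => eval v s = eval v t
  | FTrue _ => fun _ => True
  | FFalse _ => fun _ => False
  | FNot _ q => fun v => ~ sat q v
  | FAnd _ q r => fun v => sat q v /\ sat r v
  | FOr _ q r => fun v => sat q v \/ sat r v
  | FImp _ q r => fun v => sat q v -> sat r v
  | FAll _ q => fun v => forall c : A, sat q (extend v c)
  | FEx _ q => fun v => exists c : A, sat q (extend v c)
  end.

Definition no_var (A : Type) : Empty_set -> A := fun e => match e with end.

Definition models_Th (K : algebra -> Prop) (M : algebra) : Prop :=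
  forall phi : fo Empty_set,
    (forall A, K A -> sat phi (no_var A)) -> sat phi (no_var M).

(* g : B -> M interprets the names of elements of B so that M satisfies
   the positive atomic diagram D+(B) *)
Definition sat_posdiag (B M : algebra) (g : B -> M) : Prop :=
  forall s t : term B, eval (fun x : B => x) s = eval (fun x : B => x) t ->
    eval g s = eval g t.

Definition hom (A B : algebra) (h : A -> B) : Prop :=
  forall f (args : 'I_(oparity f) -> A), h (op A f args) = op B f (fun i => h (args i)).

Definition iso (A B : algebra) (h : A -> B) : Prop :=
  hom h /\ injective h /\ (forall y, exists x, h x = y).

Definition closed (A : algebra) (S : A -> Prop) : Prop :=
  forall f (args : 'I_(oparity f) -> A), (forall i, S (args i)) -> S (op A f args).

Definition SubAlg (A : algebra) (S : A -> Prop) (hS : closed S) : algebra :=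
  @Algebra {x : A | S x}
    (fun f args => exist S (op A f (fun i => proj1_sig (args i)))
                     (hS f _ (fun i => proj2_sig (args i)))).

Definition gen (A : algebra) V (a : V -> A) (c : A) : Prop :=
  forall S : A -> Prop, closed S -> (forall i, S (a i)) -> S c.

Lemma gen_closed (A : algebra) V (a : V -> A) : closed (gen a).
Proof. move=> f args H S hS ha; apply: (hS f args) => i; exact: (H i S hS ha). Qed.

Lemma gen_in (A : algebra) V (a : V -> A) (i : V) : gen a (a i).
Proof. rewrite /gen => S _ ha; exact: ha. Qed.

Definition SubGen (A : algebra) V (a : V -> A) : algebra :=
  SubAlg (@gen_closed A V a).

Definition gen_tuple (A : algebra) V (a : V -> A) : V -> SubGen a :=
  fun i => exist (gen a) (a i) (@gen_in A V a i).

Definition generates (A : algebra) V (a : V -> A) : Prop :=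
  forall c : A, gen a c.

Definition ultrafilter (I : Type) (U : (I -> Prop) -> Prop) : Prop :=
  [/\ U (fun _ => True), ~ U (fun _ => False),
      (forall X Y, U X -> (forall i, X i -> Y i) -> U Y),
      (forall X Y, U X -> U Y -> U (fun i => X i /\ Y i))
    & (forall X, U X \/ U (fun i => ~ X i))].

(* C is (isomorphic to) the ultraproduct of the family Af modulo U: there is a
   surjective homomorphism from the direct product onto C whose kernel is
   the U-agreement relation *)
Definition is_ultraproduct (I : Type) (Af : I -> algebra)
    (U : (I -> Prop) -> Prop) (C : algebra) : Prop :=
  exists h : (forall i, Af i) -> C,
    [/\ (forall y, exists s, h s = y),
        (forall s t, h s = h t <-> U (fun i => s i = t i))
      & (forall f (args : 'I_(oparity f) -> forall i, Af i),
           h (fun i => op (Af i) f (fun k => args k i)) =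
           op C f (fun k => h (args k)))].

Definition universal_class (K : algebra -> Prop) : Prop :=
  [/\ (forall (A B : algebra) (h : A -> B), K A -> iso h -> K B),
      (forall (B : algebra) (S : B -> Prop) (hS : closed S), K B -> K (SubAlg hS))
    & (forall I (Af : I -> algebra) U C,
         (forall i, K (Af i)) -> ultrafilter U -> is_ultraproduct Af U C -> K C)].

Definition K_entails (K : algebra -> Prop) V (pi : seq (equation V)) (e : equation V) :=
  forall A, K A -> forall v : V -> A, sat_eqs v pi -> sat_eq v e.

Definition fin_pres (K : algebra -> Prop) (B : algebra) V (c : V -> B)
    (pi : seq (equation V)) : Prop :=
  [/\ generates c, sat_eqs c pi & forall e, sat_eq c e <-> K_entails K pi e].

Definition has_fin_pres (K : algebra -> Prop) : Prop :=
  forall (n : nat) (pi : seq (equation 'I_n)),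
    (exists A, K A /\ exists v : 'I_n -> A, sat_eqs v pi) ->
    exists A, K A /\ exists a : 'I_n -> A, fin_pres K a pi.

Definition tup2 (A : Type) X Y (a : X -> A) (b : Y -> A) : X + Y -> A :=
  fun k => match k with inl i => a i | inr j => b j end.

(* Th(K) u D+(B) |= rho(a,b) -> chi(a)  (semantic consequence; by
   completeness equivalent to derivability) *)
Definition ThD_conseq (K : algebra -> Prop) (B : algebra) n m
    (a : 'I_n -> B) (b : 'I_m -> B) (rho : seq (equation ('I_n + 'I_m)))
    (chi : qff 'I_n) : Prop :=
  forall (M : algebra) (g : B -> M), models_Th K M -> sat_posdiag g ->
    sat_neqs (fun k => g (tup2 a b k)) rho -> satq (fun i => g (a i)) chi.

Definition CCEP (K : algebra -> Prop) : Prop :=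
  forall (B : algebra) (n m : nat) (a : 'I_n -> B) (b : 'I_m -> B)
         (pi : seq (equation ('I_n + 'I_m))),
    K B -> fin_pres K (tup2 a b) pi ->
    (forall j, ~ gen a (b j)) ->
    forall rho : seq (equation ('I_n + 'I_m)),
      sat_neqs (tup2 a b) rho ->
      exists chi : qff 'I_n,
        ThD_conseq K a b rho chi /\
        forall (A' : algebra) (h : SubGen a -> A'),
          K A' -> hom h -> (forall y, exists x, h x = y) ->
          satq (fun i => h (gen_tuple a i)) chi ->
          exists (B' : algebra) (e : A' -> B') (h' : B -> B'),
            K B' /\ hom e /\ injective e /\ hom h' /\
            (forall y, exists x, h' x = y) /\
            (forall x : SubGen a, h' (proj1_sig x) = e (h x)) /\
            sat_neqs (tup2 (fun i => e (h (gen_tuple a i)))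
                               (fun j => h' (b j))) rho.

Definition amalg_condition (K : algebra -> Prop) : Prop :=
  forall (n m : nat) (psi : seq (literal ('I_n + 'I_m))),
    exists chi : qff 'I_n,
      (forall A, K A -> forall v : 'I_n + 'I_m -> A,
         sat_lits v psi -> satq (fun i => v (inl i)) chi) /\
      (forall (A : algebra) (a : 'I_n -> A),
         K A -> generates a -> satq a chi ->
         (forall s t : term 'I_n,
            (forall A0, K A0 -> forall v : 'I_n + 'I_m -> A0,
               sat_eqs v (pos_part psi) ->
               eval (fun i => v (inl i)) s = eval (fun i => v (inl i)) t) ->
            eval a s = eval a t) ->
         exists (B : algebra) (e : A -> B) (b : 'I_m -> B),
           [/\ K B, hom e, injective e & sat_lits (tup2 (fun i => e (a i)) b) psi]).

End UA.

(* Main.v *)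
Require Import Defs.
From mathcomp Require Import all_boot.
From Stdlib Require Import ClassicalEpsilon FunctionalExtensionality ProofIrrelevance Classical.
Set Implicit Arguments. Unset Strict Implicit. Unset Printing Implicit Defensive.

Fixpoint subst {L : signature} {V W : Type} (s : V -> term L W) (t : term L V) : term L W :=
  match t with
  | Var x => s x
  | App f args => App (fun i => subst s (args i))
  end.

Definition substp {L : signature} {V W : Type} (s : V -> term L W) (e : equation L V) : equation L W :=
  (subst s e.1, subst s e.2).

Lemma eval_subst (L : signature) (A : algebra L) V W (s : V -> term L W) (v : W -> A) t :
  eval v (subst s t) = eval (fun x => eval v (s x)) t.
Proof.
elim: t => [x|f args IH] //=; f_equal; apply: functional_extensionality => i; exact: IH.
Qed.

Lemma eval_hom (L : signature) (A B : algebra L) (g : A -> B) V (c : V -> A) t :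
  hom g -> eval (fun x => g (c x)) t = g (eval c t).
Proof.
move=> hg; elim: t => [x|f args IH] //=; rewrite hg; f_equal;
  apply: functional_extensionality => i; exact: IH.
Qed.

Lemma sig_eq (A : Type) (P : A -> Prop) (x y : {a | P a}) :
  proj1_sig x = proj1_sig y -> x = y.
Proof. case: x => x px; case: y => y py /= E; subst y; f_equal; apply: proof_irrelevance. Qed.

Lemma gen_term (L : signature) (A : algebra L) V (c : V -> A) x :
  gen c x -> exists t, eval c t = x.
Proof.
move=> H; apply: (H (fun x => exists t, eval c t = x)); last by move=> i; exists (Var L i).
move=> f args Hargs.
have T : forall i, {t | eval c t = args i}.
  by move=> i; apply: constructive_indefinite_description; exact: Hargs.
exists (App (fun i => proj1_sig (T i))) => /=; f_equal.
apply: functional_extensionality => i; exact: (proj2_sig (T i)).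
Qed.

Lemma term_gen (L : signature) (A : algebra L) V (c : V -> A) t : gen c (eval c t).
Proof.
elim: t => [x|f args IH] /=; first exact: gen_in.
apply: (@gen_closed L A V c f) => i; exact: IH.
Qed.

Lemma gen_hom (L : signature) (A B : algebra L) (g : A -> B) V (c : V -> A) x :
  hom g -> gen c x -> gen (fun i => g (c i)) (g x).
Proof. move=> hg /gen_term [t <-]; rewrite -eval_hom //; exact: term_gen. Qed.

Lemma gen_tuple_eval (L : signature) (A : algebra L) V (a : V -> A) t :
  proj1_sig (eval (gen_tuple a) t) = eval a t.
Proof.
elim: t => [x|f args IH] //=; f_equal; apply: functional_extensionality => i; exact: IH.
Qed.

Lemma subgen_generates (L : signature) (A : algebra L) V (a : V -> A) :
  generates (gen_tuple a).
Proof.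
move=> [y Hy]; have [t Et] := gen_term Hy.
have -> : exist (gen a) y Hy = eval (gen_tuple a) t.
  by apply: sig_eq; rewrite gen_tuple_eval.
exact: term_gen.
Qed.

Lemma hom_from_gen (L : signature) (D C : algebra L) V (c : V -> D) (w : V -> C) :
  generates c ->
  (forall t1 t2, eval c t1 = eval c t2 -> eval w t1 = eval w t2) ->
  exists g : D -> C, hom g /\ forall v, g (c v) = w v.
Proof.
move=> Hgen Hwd.
have T : forall x, {t | eval c t = x}.
  by move=> x; apply: constructive_indefinite_description; apply: gen_term; exact: Hgen.
exists (fun x => eval w (proj1_sig (T x))); split.
  move=> f args.
  have -> : @op L C f (fun i => eval w (proj1_sig (T (args i))))
          = eval w (App (fun i => proj1_sig (T (args i)))) by [].
  apply: Hwd => /=; rewrite (proj2_sig (T _)); f_equal.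
  by apply: functional_extensionality => i; rewrite (proj2_sig (T _)).
move=> v; have -> : w v = eval w (Var L v) by [].
by apply: Hwd; rewrite (proj2_sig (T _)).
Qed.

Lemma hom_surj (L : signature) (D C : algebra L) V (c : V -> D) (w : V -> C) (g : D -> C) :
  hom g -> (forall v, g (c v) = w v) -> generates w -> forall y, exists x, g x = y.
Proof.
move=> hg Hgw Hgen y; have [t <-] := gen_term (Hgen y).
exists (eval c t); rewrite -eval_hom //; f_equal; apply: functional_extensionality; exact: Hgw.
Qed.

Lemma sat_eqs_cat (L : signature) (A : algebra L) V (v : V -> A) P Q :
  sat_eqs v (P ++ Q) <-> sat_eqs v P /\ sat_eqs v Q.
Proof. elim: P => [|e P IH] /=; [tauto | rewrite IH; tauto]. Qed.

Lemma sat_eqs_subst (L : signature) (A : algebra L) V W (s : V -> term L W) (v : W -> A) P :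
  sat_eqs v (map (substp s) P) <-> sat_eqs (fun x => eval v (s x)) P.
Proof.
elim: P => [|e P IH] /=; first tauto.
by rewrite /sat_eq /substp /= !eval_subst IH.
Qed.

Lemma sat_eqs_hom (L : signature) (A B : algebra L) (g : A -> B) V (c : V -> A) P :
  hom g -> sat_eqs c P -> sat_eqs (fun x => g (c x)) P.
Proof.
move=> hg; elim: P => [|e P IH] //= [He HP]; split; last exact: IH.
by rewrite /sat_eq !eval_hom // He.
Qed.

Lemma sat_eqs_map_all (L : signature) (A : algebra L) V (v : V -> A) (X : Type) (f : X -> equation L V) s :
  (forall x, sat_eq v (f x)) -> sat_eqs v (map f s).
Proof. move=> H; elim: s => [|x s IH] //=. Qed.

Lemma sat_eqs_map_inv (L : signature) (A : algebra L) V (v : V -> A) (X : eqType) (f : X -> equation L V) s :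
  sat_eqs v (map f s) -> forall x, x \in s -> sat_eq v (f x).
Proof.
elim: s => [|y s IH] //= [Hy Hs] x; rewrite in_cons => /orP [/eqP -> //|]; exact: IH.
Qed.

Fixpoint negs {L : signature} {V : Type} (p : seq (literal L V)) : seq (equation L V) :=
  match p with
  | [::] => [::]
  | LPos _ _ :: q => negs q
  | LNeg s t :: q => (s, t) :: negs q
  end.

Lemma sat_lits_split (L : signature) (A : algebra L) V (v : V -> A) p :
  sat_lits v p <-> sat_eqs v (pos_part p) /\ sat_neqs v (negs p).
Proof.
elim: p => [|[s t|s t] p IH] /=; first tauto.
  rewrite IH /sat_eq /=; tauto.
rewrite IH /sat_eq /=; tauto.
Qed.

Lemma sat_neqs_subst (L : signature) (A : algebra L) V W (s : V -> term L W) (v : W -> A) P :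
  sat_neqs v (map (substp s) P) <-> sat_neqs (fun x => eval v (s x)) P.
Proof.
elim: P => [|e P IH] /=; first tauto.
by rewrite /sat_eq /substp /= !eval_subst IH.
Qed.

Lemma fin_pres_hom (L : signature) (K : algebra L -> Prop) (B C : algebra L) V (c : V -> B) P (w : V -> C) :
  fin_pres K c P -> K C -> sat_eqs w P -> exists g : B -> C, hom g /\ forall v, g (c v) = w v.
Proof.
case=> Hgen Hsat Hiff KC Hw; apply: hom_from_gen => // t1 t2 E.
have : sat_eq c (t1, t2) by [].
by move/Hiff => /(_ C KC w Hw).
Qed.

Lemma fin_pres_bij (L : signature) (K : algebra L -> Prop) (B : algebra L) V W
  (c : W -> B) (f : V -> W) (g : W -> V) P :
  cancel f g -> cancel g f ->
  fin_pres K c (map (substp (fun x => Var L (f x))) P) -> fin_pres K (fun x => c (f x)) P.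
Proof.
move=> fK gK [Hgen Hsat Hiff]; split.
- move=> y; have [t <-] := gen_term (Hgen y).
  have -> : eval c t = eval (fun x => c (f x)) (subst (fun w => Var L (g w)) t).
    rewrite eval_subst /=; f_equal; apply: functional_extensionality => w; by rewrite gK.
  exact: term_gen.
- by move: Hsat; rewrite sat_eqs_subst.
- move=> e; split.
  + move=> He.
    have : sat_eq c (substp (fun x => Var L (f x)) e) by rewrite /sat_eq /substp /= !eval_subst.
    move/Hiff => H A KA u Hu.
    have Hu' : sat_eqs (fun w => u (g w)) (map (substp (fun x => Var L (f x))) P).
      rewrite sat_eqs_subst /=.
      have -> : (fun x => u (g (f x))) = u by apply: functional_extensionality => x; rewrite fK.
      done.
    have := H A KA _ Hu'; rewrite /sat_eq /substp /= !eval_subst /=.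
    have -> : (fun x => u (g (f x))) = u by apply: functional_extensionality => x; rewrite fK.
    done.
  + move=> H.
    have : sat_eq c (substp (fun x => Var L (f x)) e).
      apply/Hiff => A KA u; rewrite sat_eqs_subst => Hu.
      have := H A KA _ Hu; by rewrite /sat_eq /substp /= !eval_subst.
    by rewrite /sat_eq /substp /= !eval_subst.
Qed.

Lemma fin_pres_transfer (L : signature) (K : algebra L -> Prop) (B : algebra L) V (W : finType)
  (c : V -> B) (d : W -> B) P (s : V -> term L W) (tau : W -> term L V) :
  K B -> fin_pres K c P -> (forall v, eval d (s v) = c v) -> (forall w, eval c (tau w) = d w) ->
  fin_pres K d (map (substp s) P ++ [seq (Var L w, subst s (tau w)) | w <- enum W]).
Proof.
move=> KB [Hgen Hsat Hiff] Hs Htau.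
have Ec : (fun x => eval d (s x)) = c by apply: functional_extensionality.
have Ed : (fun x => eval c (tau x)) = d by apply: functional_extensionality.
have Hsd : sat_eqs d (map (substp s) P ++ [seq (Var L w, subst s (tau w)) | w <- enum W]).
  apply/sat_eqs_cat; split; first by rewrite sat_eqs_subst Ec.
  apply: sat_eqs_map_all => w; by rewrite /sat_eq /= eval_subst Ec Htau.
split => //.
- move=> y; have [t <-] := gen_term (Hgen y).
  rewrite -Ec -eval_subst; exact: term_gen.
- move=> e; split; last by move=> H; apply: H.
  move=> He.
  have : sat_eq c (substp tau e) by rewrite /sat_eq /substp /= !eval_subst Ed.
  move/Hiff => H A KA u /sat_eqs_cat [Hu1 Hu2].
  move: Hu1; rewrite sat_eqs_subst => /(H A KA).
  rewrite /sat_eq /substp /= !eval_subst.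
  have -> : (fun x => eval (fun x0 => eval u (s x0)) (tau x)) = u; last done.
  apply: functional_extensionality => w.
  have := sat_eqs_map_inv Hu2 (mem_enum W w); rewrite /sat_eq /= eval_subst => ->.
  done.
Qed.

Fixpoint qff2fo {L : signature} {V : Type} (q : qff L V) : fo L V :=
  match q with
  | QTrue => @FTrue L V
  | QFalse => @FFalse L V
  | QEq s t => FEq s t
  | QNot q => FNot (qff2fo q)
  | QAnd q r => FAnd (qff2fo q) (qff2fo r)
  | QOr q r => FOr (qff2fo q) (qff2fo r)
  | QImp q r => FImp (qff2fo q) (qff2fo r)
  end.

Lemma sat_qff2fo (L : signature) (A : algebra L) V (v : V -> A) q :
  sat (qff2fo q) v <-> satq v q.
Proof. elim: q => //= [q IH|q IH r IH'|q IH r IH'|q IH r IH']; tauto. Qed.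

Fixpoint qsubst {L : signature} {V W : Type} (s : V -> term L W) (q : qff L V) : qff L W :=
  match q with
  | QTrue => QTrue L W
  | QFalse => QFalse L W
  | QEq a b => QEq (subst s a) (subst s b)
  | QNot q => QNot (qsubst s q)
  | QAnd q r => QAnd (qsubst s q) (qsubst s r)
  | QOr q r => QOr (qsubst s q) (qsubst s r)
  | QImp q r => QImp (qsubst s q) (qsubst s r)
  end.

Lemma satq_subst (L : signature) (A : algebra L) V W (s : V -> term L W) (v : W -> A) q :
  satq v (qsubst s q) <-> satq (fun x => eval v (s x)) q.
Proof.
elim: q => //= [a b|q IH|q IH r IH'|q IH r IH'|q IH r IH']; rewrite ?eval_subst; tauto.
Qed.

Definition lit2fo {L : signature} {V : Type} (l : literal L V) : fo L V :=
  match l with LPos s t => FEq s t | LNeg s t => FNot (FEq s t) end.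

Definition lits2fo {L : signature} {V : Type} (p : seq (literal L V)) : fo L V :=
  foldr (fun l phi => FAnd (lit2fo l) phi) (@FTrue L V) p.

Lemma sat_lits2fo (L : signature) (A : algebra L) V (v : V -> A) p :
  sat (lits2fo p) v <-> sat_lits v p.
Proof. elim: p => [|[s t|s t] p IH] /=; tauto. Qed.

Definition substl {L : signature} {V W : Type} (s : V -> term L W) (l : literal L V) : literal L W :=
  match l with LPos a b => LPos (subst s a) (subst s b) | LNeg a b => LNeg (subst s a) (subst s b) end.

Lemma sat_lits_subst (L : signature) (A : algebra L) V W (s : V -> term L W) (v : W -> A) p :
  sat_lits v (map (substl s) p) <-> sat_lits (fun x => eval v (s x)) p.
Proof. elim: p => [|[a b|a b] p IH] /=; rewrite ?eval_subst; tauto. Qed.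

Fixpoint optn (k : nat) : Type := match k with 0 => Empty_set | k.+1 => option (optn k) end.

Fixpoint closeAll {L : signature} (k : nat) : fo L (optn k) -> fo L Empty_set :=
  match k return fo L (optn k) -> fo L Empty_set with
  | 0 => fun phi => phi
  | k.+1 => fun phi => @closeAll L k (FAll phi)
  end.

Lemma sat_closeAll' (L : signature) (A : algebra L) k :
  forall (phi : fo L (optn k)), sat (@closeAll L k phi) (no_var A) <-> forall v : optn k -> A, sat phi v.
Proof.
elim: k => [|k IH] phi /=.
  split; last by apply.
  move=> H v; have -> : v = no_var A by apply: functional_extensionality; case.
  done.
rewrite IH /=; split.
  move=> H w; have := H (fun x => w (Some x)) (w None).
  have -> : extend (fun x => w (Some x)) (w None) = w by apply: functional_extensionality; case.
  done.
by move=> H v c; apply: H.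
Qed.

Fixpoint pos (k : nat) (j : nat) : optn k.+1 :=
  match k return optn k.+1 with
  | 0 => None
  | k'.+1 => if j == k'.+1 then None else Some (pos k' j)
  end.

Fixpoint idx (k : nat) : optn k -> nat :=
  match k return optn k -> nat with
  | 0 => fun e => match e with end
  | k'.+1 => fun o => match o with None => k' | Some x => @idx k' x end
  end.

Lemma idx_pos k j : j <= k -> @idx k.+1 (pos k j) = j.
Proof.
elim: k => [|k IH] /=; first by rewrite leqn0 => /eqP ->.
case: eqP => [-> //|/eqP ne] le; apply: IH.
by rewrite -ltnS ltn_neqAle ne.
Qed.

Definition enc (n m : nat) (y : 'I_n + 'I_m) : optn (n + m).+1 := pos (n + m) (unsplit y).
Definition dec (n m : nat) (x : nat) : option ('I_n + 'I_m) :=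
  omap split (insub x : option 'I_(n + m)).

Lemma dec_enc n m (y : 'I_n + 'I_m) : dec n m (idx (enc y)) = Some y.
Proof.
rewrite /enc idx_pos; last exact: ltnW (ltn_ord _).
by rewrite /dec valK /= unsplitK.
Qed.

Definition sentence {L : signature} (n m : nat) (psi : seq (literal L ('I_n + 'I_m))) (chi : qff L 'I_n)
  : fo L Empty_set :=
  @closeAll L (n + m).+1
    (FImp (lits2fo (map (substl (fun y => Var L (enc y))) psi))
          (qff2fo (qsubst (fun i => Var L (enc (inl i))) chi))).

Lemma sentence_true (L : signature) (A : algebra L) n m psi chi :
  (forall v : 'I_n + 'I_m -> A, sat_lits v psi -> satq (fun i => v (inl i)) chi) ->
  sat (@sentence L n m psi chi) (no_var A).
Proof.
move=> H; rewrite /sentence sat_closeAll' => u /=.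
rewrite sat_lits2fo sat_lits_subst sat_qff2fo satq_subst /=.
exact: H.
Qed.

Lemma sentence_sound (L : signature) (M : algebra L) n m psi chi (d : M) :
  sat (@sentence L n m psi chi) (no_var M) ->
  forall v : 'I_n + 'I_m -> M, sat_lits v psi -> satq (fun i => v (inl i)) chi.
Proof.
rewrite /sentence sat_closeAll' => H v Hv.
pose u := fun z : optn (n + m).+1 => match dec n m (idx z) with Some y => v y | None => d end.
have Hu : (fun y => u (enc y)) = v.
  by apply: functional_extensionality => y; rewrite /u dec_enc.
have := H u; rewrite /= sat_lits2fo sat_lits_subst sat_qff2fo satq_subst /=.
have Hu' : (fun i => u (enc (inl i))) = (fun i => v (inl i)).
  by apply: functional_extensionality => y; rewrite /u dec_enc.
rewrite Hu Hu'; exact.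
Qed.

Lemma ord_false (k : nat) (i : 'I_k) : k = 0 -> False.
Proof. by case: i => i hi E; rewrite E in hi. Qed.

Lemma some_elem (L : signature) (hconst : exists f : opsym L, oparity f = 0) (M : algebra L) :
  exists d : M, True.
Proof.
case: hconst => f0 H0; exists (@op L M f0 (fun i => False_rect _ (ord_false i H0))); done.
Qed.

Lemma sat_eq_gen_tuple (L : signature) (A : algebra L) V (w : V -> A) e :
  sat_eq (gen_tuple w) e <-> sat_eq w e.
Proof.
rewrite /sat_eq; split.
  by move=> /(congr1 (@proj1_sig _ _)); rewrite !gen_tuple_eval.
by move=> E; apply: sig_eq; rewrite !gen_tuple_eval.
Qed.

Lemma sat_eqs_gen_tuple (L : signature) (A : algebra L) V (w : V -> A) P :
  sat_eqs (gen_tuple w) P <-> sat_eqs w P.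
Proof. elim: P => [|e P IH] /=; [tauto| rewrite sat_eq_gen_tuple IH; tauto]. Qed.

Lemma sat_neqs_gen_tuple (L : signature) (A : algebra L) V (w : V -> A) P :
  sat_neqs (gen_tuple w) P <-> sat_neqs w P.
Proof. elim: P => [|e P IH] /=; [tauto| rewrite sat_eq_gen_tuple IH; tauto]. Qed.

Lemma gen_mono (L : signature) (A : algebra L) V W (c : V -> A) (d : W -> A) x :
  (forall i, gen d (c i)) -> gen c x -> gen d x.
Proof. move=> H Hx; apply: Hx => //; exact: gen_closed. Qed.

Lemma posdiag_eqs (L : signature) (B M : algebra L) (g : B -> M) V (c : V -> B) P :
  sat_posdiag g -> sat_eqs c P -> sat_eqs (fun x => g (c x)) P.
Proof.
move=> Hg; elim: P => [|e P IH] //= [He HP]; split; last exact: IH.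
move: He; rewrite /sat_eq.
have E1 : forall t, eval c t = eval (fun x : B => x) (subst (fun x => Var L (c x)) t).
  by move=> t; rewrite eval_subst.
have E2 : forall t, eval (fun x => g (c x)) t = eval g (subst (fun x => Var L (c x)) t).
  by move=> t; rewrite eval_subst.
rewrite !E1 !E2; exact: Hg.
Qed.

Lemma pos_part_mk (L : signature) V (pi rho : seq (equation L V)) :
  pos_part (map (fun e => LPos e.1 e.2) pi ++ map (fun e => LNeg e.1 e.2) rho) = pi.
Proof.
elim: pi => [|[s t] pi IH] /=; last by rewrite IH.
by elim: rho => [|[s t] rho IH].
Qed.

Lemma negs_mk (L : signature) V (pi rho : seq (equation L V)) :
  negs (map (fun e => LPos e.1 e.2) pi ++ map (fun e => LNeg e.1 e.2) rho) = rho.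
Proof.
elim: pi => [|[s t] pi IH] //=.
by elim: rho => [|[s t] rho IH] //=; rewrite IH.
Qed.

Lemma sat_neqs_ext (L : signature) (A : algebra L) V (v1 v2 : V -> A) P :
  (forall x, v1 x = v2 x) -> sat_neqs v1 P -> sat_neqs v2 P.
Proof. by move=> H; have -> : v1 = v2 by apply: functional_extensionality. Qed.

Lemma amalg_to_CCEP (L : signature) (hconst : exists f : opsym L, oparity f = 0)
    (K : algebra L -> Prop) :
  universal_class K -> amalg_condition K -> CCEP K.
Proof.
move=> [Kiso Ksub Kup] Ham B n m a b pi KB Hpres hb rho Hrho.
pose psi := map (fun e => LPos e.1 e.2) pi ++ map (fun e => LNeg e.1 e.2) rho.
have Hpos : pos_part psi = pi by apply: pos_part_mk.
have Hneg : negs psi = rho by apply: negs_mk.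
have [chi [Hi Hii]] := Ham n m psi.
exists chi; split.
  move=> M g HM Hg Hr.
  have Hsent : sat (sentence psi chi) (no_var M).
    apply: HM => A KA; apply: sentence_true => v; exact: Hi A KA v.
  have [d _] := some_elem hconst M.
  apply: (sentence_sound d Hsent (v := fun k => g (tup2 a b k))).
  rewrite sat_lits_split Hpos Hneg; split => //.
  case: Hpres => _ Hs _; exact: posdiag_eqs.
move=> A' h KA' hh hsurj Hchi.
pose a'' := fun i => h (gen_tuple a i).
have Hgen' : generates a''.
  move=> y; have [x <-] := hsurj y; apply: gen_hom => //; exact: subgen_generates.
have Heq : forall s t : term L 'I_n,
    (forall A0, K A0 -> forall v : 'I_n + 'I_m -> A0,
       sat_eqs v (pos_part psi) ->
       eval (fun i => v (inl i)) s = eval (fun i => v (inl i)) t) ->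
    eval a'' s = eval a'' t.
  move=> s t H; rewrite /a'' !eval_hom //; f_equal; apply: sig_eq; rewrite !gen_tuple_eval.
  case: (Hpres) => _ Hs _; apply: (H B KB (tup2 a b)); by rewrite Hpos.
have [B'' [e [b' [KB'' he einj Hsat]]]] := Hii A' a'' KA' Hgen' Hchi Heq.
pose w := tup2 (fun i => e (a'' i)) b'.
move: Hsat; rewrite sat_lits_split Hpos Hneg => -[Hwp Hwn].
have KB' : K (SubGen w) by apply: Ksub.
have HwB : sat_eqs (gen_tuple w) pi by rewrite sat_eqs_gen_tuple.
have [h' [hh' Hh'c]] := fin_pres_hom Hpres KB' HwB.
have hsurj' := hom_surj hh' Hh'c (subgen_generates (a:=w)).
have Hge : forall y, gen w (e y).
  move=> y; have [x <-] := hsurj y.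
  have Hx : gen a'' (h x) by apply: gen_hom => //; exact: subgen_generates.
  have Hx' := gen_hom he Hx.
  apply: gen_mono Hx' => i; exact: (@gen_in L B'' _ w (inl i)).
pose e' := fun y => exist (gen w) (e y) (Hge y) : SubGen w.
have he' : hom e'.
  by move=> f args; apply: sig_eq => /=; rewrite he.
exists (SubGen w), e', h'; split => //; split => //; split.
  by move=> x y /(congr1 (@proj1_sig _ _)) /= /einj.
split => //; split => //; split.
  move=> x; have [t <-] := gen_term (subgen_generates (a:=a) x); rewrite gen_tuple_eval.
  have -> : eval a t = eval (tup2 a b) (subst (fun i => Var L (inl i)) t) by rewrite eval_subst.
  rewrite -eval_hom // eval_subst /=.
  have -> : e' (h (eval (gen_tuple a) t)) = eval (fun i => e' (h (gen_tuple a i))) t.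
    by rewrite (eval_hom (g := e')) // (eval_hom (g := h)).
  f_equal; apply: functional_extensionality => i.
  have := Hh'c (inl i); rewrite /= => ->; by apply: sig_eq.
move: Hwn; rewrite -(sat_neqs_gen_tuple w) => Hwn.
apply: (sat_neqs_ext _ Hwn) => -[i|j] /=; first by apply: sig_eq.
by have := Hh'c (inr j); rewrite /= => ->.
Qed.

Definition pdec (P : Prop) : bool := if excluded_middle_informative P then true else false.

Lemma pdecP (P : Prop) : pdec P = true <-> P.
Proof. rewrite /pdec; case: excluded_middle_informative => //. Qed.

Lemma elim_step (L : signature) (hconst : exists f : opsym L, oparity f = 0)
  (K : algebra L -> Prop) (B : algebra L) n m (a : 'I_n -> B) (b : 'I_m -> B) P :
  K B -> fin_pres K (tup2 a b) P ->
  exists m' (bsel : 'I_m' -> 'I_m) (s0 : 'I_n + 'I_m -> term L ('I_n + 'I_m')) P',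
    [/\ (forall k, ~ gen a (b (bsel k))),
        (forall x, eval (tup2 a (fun k => b (bsel k))) (s0 x) = tup2 a b x)
      & fin_pres K (tup2 a (fun k => b (bsel k))) P'].
Proof.
move=> KB Hpres.
case: hconst => f0 H0.
pose dflt : term L 'I_n := App (f := f0) (fun i => False_rect _ (ord_false i H0)).
pose J : {pred 'I_m} := [pred j | pdec (~ gen a (b j))].
pose T : 'I_m -> term L 'I_n := fun j =>
  match excluded_middle_informative (exists t, eval a t = b j) with
  | left H => proj1_sig (constructive_indefinite_description _ H)
  | right _ => dflt end.
have HT : forall j, gen a (b j) -> eval a (T j) = b j.
  move=> j /gen_term Hj; rewrite /T; case: excluded_middle_informative => // H.
  exact: (proj2_sig (constructive_indefinite_description _ H)).
pose bsel := fun k : 'I_#|J| => enum_val k.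
pose s0 : 'I_n + 'I_m -> term L ('I_n + 'I_#|J|) := fun x =>
  match x with
  | inl i => Var L (inl i)
  | inr j => match [pick k | enum_val k == j] with
             | Some k => Var L (inr k)
             | None => subst (fun i => Var L (inl i)) (T j) end
  end.
pose tau : 'I_n + 'I_#|J| -> term L ('I_n + 'I_m) := fun w =>
  match w with inl i => Var L (inl i) | inr k => Var L (inr (bsel k)) end.
have Hs0 : forall x, eval (tup2 a (fun k => b (bsel k))) (s0 x) = tup2 a b x.
  case=> [i|j] //=.
  case: pickP => [k /eqP Ek | Hnone] /=; first by rewrite /bsel Ek.
  rewrite eval_subst /=; apply: HT.
  apply: NNPP => Hj.
  have Jj : j \in J by rewrite inE; apply/pdecP.
  have := Hnone (enum_rank_in Jj j); by rewrite enum_rankK_in // eqxx.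
have Htau : forall w, eval (tup2 a b) (tau w) = tup2 a (fun k => b (bsel k)) w by case.
exists #|J|, bsel, s0; eexists; split => //; last exact: (fin_pres_transfer KB Hpres Hs0 Htau).
move=> k; have := enum_valP k.
by rewrite unfold_in => /pdecP.
Qed.

Lemma sat_eqs_ext (L : signature) (A : algebra L) V (v1 v2 : V -> A) P :
  (forall x, v1 x = v2 x) -> sat_eqs v1 P -> sat_eqs v2 P.
Proof. by move=> H; have -> : v1 = v2 by apply: functional_extensionality. Qed.

Lemma satq_ext (L : signature) (A : algebra L) V (v1 v2 : V -> A) q :
  (forall x, v1 x = v2 x) -> satq v1 q -> satq v2 q.
Proof. by move=> H; have -> : v1 = v2 by apply: functional_extensionality. Qed.

Lemma neqs_transfer (L : signature) (A1 A2 : algebra L) V (v1 : V -> A1) (v2 : V -> A2) N :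
  (forall e, sat_eq v1 e -> sat_eq v2 e) -> sat_neqs v2 N -> sat_neqs v1 N.
Proof.
move=> H; elim: N => [|e N IH] //= [He HN]; split; last exact: IH.
by move/H.
Qed.

Lemma CCEP_to_amalg (L : signature) (hconst : exists f : opsym L, oparity f = 0)
    (K : algebra L -> Prop) :
  universal_class K -> has_fin_pres K -> CCEP K -> amalg_condition K.
Proof.
move=> [Kiso Ksub Kup] Hfp Hccep n m psi.
case: (classic (exists A, K A /\ exists v : 'I_n + 'I_m -> A, sat_lits v psi))
  => [[A0 [KA0 [v0 Hv0]]] | Hno]; last first.
  exists (QFalse L 'I_n); split; last by move=> A a _ _ [].
  by move=> A KA v Hv; apply: Hno; exists A; split => //; exists v.
move: (Hv0); rewrite sat_lits_split => -[Hp0 Hn0].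
have Hsat0 : exists A, K A /\ exists v : 'I_(n + m) -> A,
    sat_eqs v (map (substp (fun y => Var L (unsplit y))) (pos_part psi)).
  exists A0; split => //; exists (fun k => v0 (split k)); rewrite sat_eqs_subst /=.
  by apply: (sat_eqs_ext _ Hp0) => x; rewrite unsplitK.
have [B [KB [c Hc]]] := Hfp _ _ Hsat0.
have Hc' := fin_pres_bij unsplitK splitK Hc.
pose a := fun i => c (unsplit (inl i) : 'I_(n + m)).
pose b := fun j => c (unsplit (inr j) : 'I_(n + m)).
have Hab : fin_pres K (tup2 a b) (pos_part psi).
  have -> : tup2 a b = (fun x => c (unsplit x)) by apply: functional_extensionality; case.
  exact: Hc'.
have Hrho : sat_neqs (tup2 a b) (negs psi).
  apply: neqs_transfer Hn0 => e He.
  case: Hab => _ _ /(_ e) [H _]; exact: (H He A0 KA0 v0 Hp0).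
have [m' [bsel [s0 [P' [hb Hs0 HP']]]]] := elim_step hconst KB Hab.
pose b' := fun k => b (bsel k).
pose rho' := map (substp s0) (negs psi).
have Hrho' : sat_neqs (tup2 a b') rho'.
  rewrite sat_neqs_subst; apply: (sat_neqs_ext _ Hrho) => x; by rewrite Hs0.
have [chi [HThD Hext]] := Hccep B n m' a b' P' KB HP' hb rho' Hrho'.
exists chi; split.
  move=> A KA v Hv; move: (Hv); rewrite sat_lits_split => -[Hvp Hvn].
  have [g [hg Hgc]] := fin_pres_hom Hab KA Hvp.
  have Eg : forall t, eval g t = g (eval (fun x => x) t).
    by move=> t; exact: (@eval_hom L B A g B (fun x => x) t hg).
  have := HThD A g.
  move=> H; have {H} := H (fun phi Hphi => Hphi A KA).
  move=> H; have {H} : sat_neqs (fun k => g (tup2 a b' k)) rho' -> satq (fun i => g (a i)) chi.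
    by apply: H => s t E; rewrite !Eg E.
  move=> H; apply: (satq_ext _ (H _)) => [i|]; first exact: (Hgc (inl i)).
  rewrite sat_neqs_subst; apply: (sat_neqs_ext _ Hvn) => x.
  by rewrite -Hgc -Hs0 -eval_hom.
move=> A a0 KA Hgen Hchi Heqs.
have [h [hh Hh]] : exists h : SubGen a -> A, hom h /\ forall i, h (gen_tuple a i) = a0 i.
  apply: hom_from_gen; first exact: subgen_generates.
  move=> t1 t2 /(congr1 (@proj1_sig _ _)); rewrite !gen_tuple_eval => E.
  apply: Heqs => A1 KA1 v Hv.
  have E' : sat_eq (tup2 a b) (substp (fun i => Var L (inl i)) (t1, t2)).
    by rewrite /sat_eq /substp /= !eval_subst.
  case: Hab => _ _ /(_ (substp (fun i => Var L (inl i)) (t1, t2))) [H _].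
  have := H E' A1 KA1 v Hv; by rewrite /sat_eq /substp /= !eval_subst.
have hsurj := hom_surj hh Hh Hgen.
have Hchi' : satq (fun i => h (gen_tuple a i)) chi.
  by apply: (satq_ext _ Hchi) => i; rewrite Hh.
have [B' [e [h' [KB' [he [einj [hh' [hsurj' [Hcomp Hneq]]]]]]]]] := Hext A h KA hh hsurj Hchi'.
have Hai : forall i, h' (a i) = e (a0 i).
  by move=> i; rewrite -Hh; exact: (Hcomp (gen_tuple a i)).
have Hval : forall x, h' (tup2 a b x) = tup2 (fun i => e (a0 i)) (fun j => h' (b j)) x.
  by case=> [i|j] //=.
exists B', e, (fun j => h' (b j)); split => //.
rewrite sat_lits_split; split.
  apply: (sat_eqs_ext Hval); apply: sat_eqs_hom => //; by case: Hab.
move: Hneq; rewrite sat_neqs_subst => Hneq; apply: (sat_neqs_ext _ Hneq) => x.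
rewrite -Hval -Hs0 -eval_hom //; f_equal; apply: functional_extensionality => -[i|k] //=.
by rewrite Hai Hh.
Qed.

Theorem propositionA3 (L : signature) (hconst : exists f : opsym L, oparity f = 0)
    (K : algebra L -> Prop) :
  universal_class K -> has_fin_pres K ->
  (CCEP K <-> amalg_condition K).
Proof.
move=> HU Hfp; split; first exact: CCEP_to_amalg.
exact: amalg_to_CCEP.
Qed.
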